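(* Let $n\ge1$ and $\beta\ge2(n+2)$. For every $l=(l_j)_{j\ge1}\in\mathbb{Z}^\infty$ with finitely many nonzero entries and $1\le|l|\le2$, $$\ln(1+\langle l\rangle)\ge\frac18\,\|l\|_{2\beta}^{\frac1{2\beta}}\,\|l\|_{-2\beta}^{\frac1{2\beta}},$$ where $\|l\|_{\pm2\beta}=\sup_{j\ge1}|l_j|(1+\ln j)^{\pm2\beta}$.
   Context: $|l|=\sum_j|l_j|$ and $\langle l\rangle=\max\{1,|\sum_{j\ge1}jl_j|\}$. *)

(* Defs.v *)
From Stdlib Require Import Reals ZArith List.
Open Scope R_scope.

(* A finitely supported sequence l = (l_j)_{j>=1} in Z^infty is represented by
   a finite list [l_1; l_2; ...; l_N] (entries beyond the list are 0). *)

Fixpoint abs_norm (l : list Z) : Z :=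
  match l with nil => 0%Z | x :: r => (Z.abs x + abs_norm r)%Z end.

Fixpoint wsum_from (j : nat) (l : list Z) : Z :=
  match l with nil => 0%Z | x :: r => (Z.of_nat j * x + wsum_from (S j) r)%Z end.

Definition bracket (l : list Z) : R := Rmax 1 (Rabs (IZR (wsum_from 1 l))).

Fixpoint wnorm_from (s : R) (j : nat) (l : list Z) : R :=
  match l with
  | nil => 0
  | x :: r => Rmax (IZR (Z.abs x) * Rpower (1 + ln (INR j)) s) (wnorm_from s (S j) r)
  end.

Definition wnorm (s : R) (l : list Z) : R := wnorm_from s 1 l.

(* Main.v *)
Require Import Defs.
From Stdlib Require Import Reals ZArith List Lia Lra Psatz Classical.
Open Scope R_scope.

Lemma abs_norm_nonneg l : (0 <= abs_norm l)%Z.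
Proof. induction l; simpl; lia. Qed.

Lemma abs_norm_nth l p : (Z.abs (nth p l 0%Z) <= abs_norm l)%Z.
Proof.
  revert p; induction l; intros p; destruct p; simpl; try lia.
  - pose proof (abs_norm_nonneg l); lia.
  - specialize (IHl p); lia.
Qed.

Lemma abs_norm_nth2 l p q : p <> q ->
  (Z.abs (nth p l 0%Z) + Z.abs (nth q l 0%Z) <= abs_norm l)%Z.
Proof.
  revert p q; induction l; intros p q Hpq; destruct p, q; simpl; try lia.
  - pose proof (abs_norm_nth l q); lia.
  - pose proof (abs_norm_nth l p); lia.
  - assert (p <> q) by lia. specialize (IHl p q H); lia.
Qed.

Lemma wsum_zero l m : abs_norm l = 0%Z -> wsum_from m l = 0%Z.
Proof.
  revert m; induction l; intros m H; simpl in *; auto.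
  pose proof (abs_norm_nonneg l).
  assert (a = 0%Z) by lia. subst. rewrite IHl by lia. lia.
Qed.

Lemma wsum_single l m p : (abs_norm l <= Z.abs (nth p l 0%Z))%Z ->
  wsum_from m l = (Z.of_nat (m + p) * nth p l 0%Z)%Z.
Proof.
  revert m p; induction l; intros m p H.
  - destruct p; simpl; lia.
  - destruct p; simpl in *.
    + rewrite wsum_zero by (pose proof (abs_norm_nonneg l); lia).
      rewrite Nat.add_0_r; lia.
    + pose proof (abs_norm_nth l p).
      assert (a = 0%Z) by lia. subst.
      rewrite (IHl (S m) p) by lia.
      replace (S m + p)%nat with (m + S p)%nat by lia. lia.
Qed.

Lemma wsum_pair l m p q : (p < q)%nat ->
  (abs_norm l <= Z.abs (nth p l 0%Z) + Z.abs (nth q l 0%Z))%Z ->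
  wsum_from m l = (Z.of_nat (m + p) * nth p l 0%Z + Z.of_nat (m + q) * nth q l 0%Z)%Z.
Proof.
  revert m p q; induction l; intros m p q Hpq H.
  - destruct p, q; simpl; lia.
  - destruct p, q; simpl in *; try lia.
    + rewrite (wsum_single l (S m) q) by lia.
      replace (S m + q)%nat with (m + S q)%nat by lia.
      rewrite Nat.add_0_r; lia.
    + assert (p <> q) by lia.
      pose proof (abs_norm_nth2 l p q H0).
      assert (a = 0%Z) by lia. subst.
      rewrite (IHl (S m) p q) by lia.
      replace (S m + p)%nat with (m + S p)%nat by lia.
      replace (S m + q)%nat with (m + S q)%nat by lia. lia.
Qed.

Lemma exists_nonzero l : (1 <= abs_norm l)%Z -> exists p, nth p l 0%Z <> 0%Z.
Proof.
  induction l; simpl; intros H; try lia.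
  destruct (Z.eq_dec a 0).
  - subst. destruct IHl as [p Hp]; [lia|]. exists (S p); simpl; auto.
  - exists 0%nat; simpl; auto.
Qed.

Lemma wnorm_nonneg s m l : 0 <= wnorm_from s m l.
Proof.
  revert m; induction l; intros m; simpl; [lra|].
  eapply Rle_trans; [apply IHl|apply Rmax_r].
Qed.

Lemma wnorm_allzero s m l : (forall p, nth p l 0%Z = 0%Z) -> wnorm_from s m l = 0.
Proof.
  revert m; induction l; intros m H; simpl; auto.
  rewrite IHl by (intro p; apply (H (S p))).
  pose proof (H 0%nat) as H0; simpl in H0; subst.
  simpl. rewrite Rmult_0_l. unfold Rmax; destruct Rle_dec; lra.
Qed.

Lemma Rpower_nonneg x y : 0 <= Rpower x y.
Proof. unfold Rpower; left; apply exp_pos. Qed.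

Lemma wnorm_arg s m l : (exists p, nth p l 0%Z <> 0%Z) ->
  exists p, nth p l 0%Z <> 0%Z /\
    wnorm_from s m l = IZR (Z.abs (nth p l 0%Z)) * Rpower (1 + ln (INR (m + p))) s.
Proof.
  revert m; induction l; intros m Hex.
  - destruct Hex as [p Hp]; destruct p; simpl in Hp; congruence.
  - simpl.
    destruct (classic (exists p, nth p l 0%Z <> 0%Z)) as [Hr|Hr].
    + destruct (IHl (S m) Hr) as [p' [Hp' Heq]].
      rewrite Heq. unfold Rmax; destruct Rle_dec.
      * exists (S p'); simpl; split; auto.
        replace (m + S p')%nat with (S m + p')%nat by lia; reflexivity.
      * destruct (Z.eq_dec a 0).
        -- subst. exfalso. apply n. simpl. rewrite Rmult_0_l.
           apply Rmult_le_pos; [apply IZR_le; lia|apply Rpower_nonneg].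
        -- exists 0%nat; simpl; split; auto. rewrite Nat.add_0_r; reflexivity.
    + assert (Hz : forall p, nth p l 0%Z = 0%Z).
      { intros p. destruct (Z.eq_dec (nth p l 0%Z) 0); auto.
        exfalso; apply Hr; eauto. }
      rewrite wnorm_allzero by auto.
      assert (a <> 0%Z).
      { destruct Hex as [p Hp]; destruct p; simpl in Hp; auto.
        }
      exists 0%nat; simpl; split; auto. rewrite Nat.add_0_r.
      apply Rmax_left.
      apply Rmult_le_pos; [apply IZR_le; lia|apply Rpower_nonneg].
Qed.

Lemma ln_le' x y : 0 < x -> x <= y -> ln x <= ln y.
Proof.
  intros Hx Hxy. destruct (Rle_lt_or_eq_dec _ _ Hxy).
  - left; apply ln_increasing; auto.
  - subst; lra.
Qed.

Lemma w_ge1 j : (1 <= j)%nat -> 1 <= 1 + ln (INR j).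
Proof.
  intros H. assert (1 <= INR j) by (replace 1 with (INR 1) by reflexivity; apply le_INR; lia).
  pose proof (ln_le' 1 (INR j) ltac:(lra) H0). rewrite ln_1 in H1. lra.
Qed.

Lemma ln2_half : / 2 <= ln 2.
Proof.
  assert (exp (/2) <= 2).
  { assert (exp (/2) * exp (/2) = exp 1) by (rewrite <- exp_plus; f_equal; lra).
    pose proof exp_le_3. pose proof (exp_pos (/2)). nra. }
  rewrite <- (ln_exp (/2)). apply ln_le'; auto. apply exp_pos.
Qed.

Lemma rp_simpl a w s : 1 <= a -> 1 <= w -> 0 < s ->
  Rpower (a * Rpower w s) (/s) = Rpower a (/s) * w.
Proof.
  intros. rewrite <- Rpower_mult_distr by (try lra; unfold Rpower; apply exp_pos).
  rewrite Rpower_mult. rewrite Rinv_r by lra. rewrite Rpower_1 by lra. reflexivity.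
Qed.

Lemma rp_simpl2 a w s : 1 <= a -> 1 <= w -> 0 < s ->
  Rpower (a * Rpower w (- s)) (/s) = Rpower a (/s) * / w.
Proof.
  intros. rewrite <- Rpower_mult_distr by (try lra; unfold Rpower; apply exp_pos).
  rewrite Rpower_mult. replace (- s * / s) with (- (1)) by (field; lra).
  rewrite Rpower_Ropp, Rpower_1 by lra. reflexivity.
Qed.

Lemma Rpower_base1 y : Rpower 1 y = 1.
Proof. unfold Rpower; rewrite ln_1, Rmult_0_r, exp_0; reflexivity. Qed.

Theorem lemma6p2 (n : nat) (beta : R) (l : list Z) :
  (1 <= n)%nat ->
  2 * (INR n + 2) <= beta ->
  (1 <= abs_norm l <= 2)%Z ->
  ln (1 + bracket l) >=
    / 8 * Rpower (wnorm (2 * beta) l) (/ (2 * beta))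
        * Rpower (wnorm (- (2 * beta)) l) (/ (2 * beta)).
Proof.
  intros Hn Hb Hl.
  assert (Hs : 1 <= 2 * beta).
  { pose proof (pos_INR n). lra. }
  set (s := 2 * beta) in *.
  destruct (exists_nonzero l ltac:(lia)) as [p0 Hp0].
  destruct (wnorm_arg s 1 l ltac:(eauto)) as [p [Hp HA]].
  destruct (wnorm_arg (- s) 1 l ltac:(eauto)) as [q [Hq HB]].
  unfold wnorm. rewrite HA, HB.
  assert (Hap : 1 <= IZR (Z.abs (nth p l 0%Z))) by (apply IZR_le; lia).
  assert (Haq : 1 <= IZR (Z.abs (nth q l 0%Z))) by (apply IZR_le; lia).
  pose proof (w_ge1 (1 + p) ltac:(lia)) as Hwp.
  pose proof (w_ge1 (1 + q) ltac:(lia)) as Hwq.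
  rewrite rp_simpl by lra. rewrite rp_simpl2 by lra.
  set (wp := 1 + ln (INR (1 + p))) in *.
  set (wq := 1 + ln (INR (1 + q))) in *.
  assert (Hbr : 1 <= bracket l) by (unfold bracket; apply Rmax_l).
  assert (HL : / 2 <= ln (1 + bracket l)).
  { eapply Rle_trans; [apply ln2_half|]. apply ln_le'; lra. }
  apply Rle_ge.
  destruct (Nat.eq_dec p q) as [Epq|Npq].
  - subst q. subst wq.
    set (X := Rpower (IZR (Z.abs (nth p l 0%Z))) (/ s)).
    assert (HX : X <= 2).
    { unfold X. eapply Rle_trans.
      - apply Rle_Rpower; [lra|]. instantiate (1 := 1).
        rewrite <- Rinv_1. apply Rinv_le_contravar; lra.
      - rewrite Rpower_1 by lra. apply IZR_le; pose proof (abs_norm_nth l p); lia. }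
    assert (0 <= X) by apply Rpower_nonneg.
    change (1 + ln (INR (1 + p))) with wp. replace (/ 8 * (X * wp) * (X * / wp)) with (/ 8 * X * X) by (field; lra).
    assert (X * X <= 2 * 2) by (apply Rmult_le_compat; lra). lra.
  - pose proof (abs_norm_nth2 l p q Npq).
    assert (Ep : Z.abs (nth p l 0%Z) = 1%Z) by lia.
    assert (Eq : Z.abs (nth q l 0%Z) = 1%Z) by lia.
    rewrite Ep, Eq, !Rpower_base1, !Rmult_1_l.
    assert (Hws : (Z.abs (Z.of_nat p - Z.of_nat q) <= Z.abs (wsum_from 1 l))%Z).
    { destruct (Nat.lt_ge_cases p q).
      - rewrite (wsum_pair l 1 p q) by lia.
        destruct (Z.abs_spec (nth p l 0%Z)) as [[? E1]|[? E1]];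
        destruct (Z.abs_spec (nth q l 0%Z)) as [[? E2]|[? E2]];
        rewrite E1 in Ep; rewrite E2 in Eq;
        [replace (nth p l 0%Z) with 1%Z by lia; replace (nth q l 0%Z) with 1%Z by lia
        |replace (nth p l 0%Z) with 1%Z by lia; replace (nth q l 0%Z) with (-1)%Z by lia
        |replace (nth p l 0%Z) with (-1)%Z by lia; replace (nth q l 0%Z) with 1%Z by lia
        |replace (nth p l 0%Z) with (-1)%Z by lia; replace (nth q l 0%Z) with (-1)%Z by lia];
        lia.
      - rewrite (wsum_pair l 1 q p) by lia.
        destruct (Z.abs_spec (nth p l 0%Z)) as [[? E1]|[? E1]];
        destruct (Z.abs_spec (nth q l 0%Z)) as [[? E2]|[? E2]];
        rewrite E1 in Ep; rewrite E2 in Eq;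
        [replace (nth p l 0%Z) with 1%Z by lia; replace (nth q l 0%Z) with 1%Z by lia
        |replace (nth p l 0%Z) with 1%Z by lia; replace (nth q l 0%Z) with (-1)%Z by lia
        |replace (nth p l 0%Z) with (-1)%Z by lia; replace (nth q l 0%Z) with 1%Z by lia
        |replace (nth p l 0%Z) with (-1)%Z by lia; replace (nth q l 0%Z) with (-1)%Z by lia];
        lia. }
    assert (Hbd : IZR (Z.abs (Z.of_nat p - Z.of_nat q)) <= bracket l).
    { unfold bracket. eapply Rle_trans; [|apply Rmax_r].
      rewrite Rabs_Zabs. apply IZR_le; auto. }
    destruct (Nat.lt_ge_cases p q) as [Hlt|Hge].
    + assert (wp <= wq).
      { unfold wp, wq. apply Rplus_le_compat_l. apply ln_le'.
        - apply lt_0_INR; lia.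
        - apply le_INR; lia. }
      assert (wp * / wq <= 1).
      { apply (Rmult_le_reg_r wq); [lra|]. rewrite Rmult_assoc, Rinv_l by lra. lra. }
      assert (0 <= wp * / wq).
      { apply Rmult_le_pos; [lra|]. left; apply Rinv_0_lt_compat; lra. }
      rewrite Rmult_assoc. nra.
    + set (d := (p - q)%nat).
      assert (Hd1 : (1 <= d)%nat) by (unfold d; lia).
      assert (HdZ : Z.abs (Z.of_nat p - Z.of_nat q) = Z.of_nat d) by (unfold d; lia).
      rewrite HdZ, <- INR_IZR_INZ in Hbd.
      assert (HdR : 1 <= INR d) by (replace 1 with (INR 1) by reflexivity; apply le_INR; lia).
      set (a := ln (1 + INR d)).
      assert (Ha : a <= ln (1 + bracket l)) by (apply ln_le'; lra).
      assert (Ha2 : / 2 <= a).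
      { eapply Rle_trans; [apply ln2_half|]. apply ln_le'; lra. }
      assert (Hb0 : 0 <= ln (INR (1 + q))).
      { rewrite <- ln_1. apply ln_le'; [lra|].
        replace 1 with (INR 1) by reflexivity; apply le_INR; lia. }
      assert (Hj : ln (INR (1 + p)) <= ln (INR (1 + q)) + a).
      { unfold a. rewrite <- ln_mult.
        - apply ln_le'. apply lt_0_INR; lia.
          replace (1 + INR d) with (INR (S d)) by (rewrite S_INR; lra).
          rewrite <- mult_INR. apply le_INR. unfold d. nia.
        - apply lt_0_INR; lia.
        - lra. }
      assert (Hk : wp <= 8 * ln (1 + bracket l) * wq).
      { unfold wp, wq. nra. }
      apply (Rmult_le_reg_r (8 * wq)); [lra|].
      replace (/ 8 * wp * / wq * (8 * wq)) with wp by (field; lra).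
      lra.
Qed.
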